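(* For every set $P$ of $n$ points in the plane, the unit disk graph $\mathrm{UDG}(P)$ has a spanning subgraph $H$ with at most $9n$ edges such that for every edge $(p,q)$ of $\mathrm{UDG}(P)$, the hop distance between $p$ and $q$ in $H$ is at most $5$.
   Context: For a finite point set $P$ in the plane, the unit disk graph $\mathrm{UDG}(P)$ is the graph with vertex set $P$ having an edge between $p,q\in P$ if and only if the Euclidean distance $|pq|\le 1$. The hop distance between two vertices of a graph $H$ is the minimum number of edges on a path between them in $H$. *)

(* Defs.v *)
From HB Require Import structures.
From mathcomp Require Import all_boot all_order all_algebra.
Set Implicit Arguments. Unset Strict Implicit. Unset Printing Implicit Defensive.
Import Order.TTheory GRing.Theory Num.Theory.
Local Open Scope ring_scope.

Definition edist (R : rcfType) (a b : R * R) : R :=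
  Num.sqrt ((a.1 - b.1) ^+ 2 + (a.2 - b.2) ^+ 2).

(* Edge of UDG(P), where the point set P is given as an injective
   labelling p : T -> R*R of a finite type T. *)
Definition udg_edge (R : rcfType) (T : finType) (p : T -> R * R) (x y : T) : bool :=
  (x != y) && (edist (p x) (p y) <= 1).

(* A graph H on vertex set T given by its set of (unordered) edges,
   each edge being a 2-element subset of T. *)
Definition adjH (T : finType) (H : {set {set T}}) : rel T :=
  fun x y => (x != y) && ([set x; y] \in H).

Definition hop_le (T : finType) (H : {set {set T}}) (k : nat) (x y : T) : Prop :=
  exists s : seq T, [/\ (size s <= k)%N, path (adjH H) x s & last x s = y].

Definition spanning_subgraph_udg (R : rcfType) (T : finType) (p : T -> R * R)
  (H : {set {set T}}) : Prop :=
  forall e, e \in H -> exists x y, e = [set x; y] /\ udg_edge p x y.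

(* Main.v *)
Require Import Defs.
From HB Require Import structures.
From mathcomp Require Import all_boot all_order all_algebra.
From mathcomp Require Import zify ring lra.
Set Implicit Arguments. Unset Strict Implicit. Unset Printing Implicit Defensive.
Import Order.TTheory GRing.Theory Num.Theory.
Local Open Scope ring_scope.

Section Strip.
Variable R : rcfType.
Variable s : R.
Hypothesis s_gt0 : 0 < s.
Variables (f : R -> int) (st : int -> R).
Hypothesis st_step : forall k, st k + s <= st (k + 1).

Lemma st_mono_nat k (d : nat) : st k + d%:R * s <= st (k + d%:Z).
Proof.
elim: d => [|d IH]; first by rewrite mul0r !addr0.
have := st_step (k + d%:Z).
have -> : k + d%:Z + 1 = k + d.+1%:Z by lia.
rewrite -natr1; lra.
Qed.

Lemma st_le k l : k <= l -> st k <= st l.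
Proof.
move=> kl; have -> : l = k + (`|l - k|%N)%:Z by lia.
have := st_mono_nat k `|l - k|%N.
have : 0 <= (`|l - k|%N)%:R * s :> R by rewrite mulr_ge0 ?ler0n // ltW.
lra.
Qed.

Lemma st_far k l (d : nat) : k + d%:Z <= l -> st k + d%:R * s <= st l.
Proof.
move=> kl; have := st_mono_nat k d; have := st_le kl; lra.
Qed.

Definition inS (v : R) := st (f v) <= v < st (f v) + s.

Lemma G_same v w : inS v -> inS w -> f v = f w -> v - w < s /\ w - v < s.
Proof. by rewrite /inS => /andP[h1 h2] /andP[h3 h4] e; rewrite e in h1 h2; split; lra. Qed.

Lemma G_far v w (d : nat) : inS v -> inS w -> f v + d.+1%:Z <= f w -> v + d%:R * s < w.
Proof.
rewrite /inS => /andP[h1 h2] /andP[h3 h4] e.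
have := st_far e; rewrite -natr1; lra.
Qed.
End Strip.

Lemma strips_exist (R : rcfType) (s : R) (X : seq R) : 0 < s ->
  exists f : R -> int, exists st : int -> R,
    (forall k, st k + s <= st (k + 1)) /\ (forall w, w \in X -> st (f w) <= w < st (f w) + s).
Proof.
move=> s0.
have ge_tr : transitive (>=%R : rel R) by move=> a b c /= h1 h2; exact: le_trans h2 h1.
have ge_tot : total (>=%R : rel R) by move=> a b /=; exact: le_total.
suff H : forall Y : seq R, sorted >=%R Y -> exists f : R -> int, exists st : int -> R,
    (forall k, st k + s <= st (k + 1)) /\ (forall w, w \in Y -> st (f w) <= w < st (f w) + s).
  have [f [st [H1 H2]]] := H _ (sort_sorted ge_tot X).
  by exists f, st; split=> // w; rewrite -(mem_sort >=%R); exact: H2.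
elim=> [|v Y IH] /=.
  exists (fun _ => 0), (fun k => k%:~R * s); split => // k.
  by rewrite intrD mulrDl mul1r.
move=> Hs; have sY := path_sorted Hs.
have allY := order_path_min ge_tr Hs.
have [f [st [Hst Hf]]] := IH sY.
case: Y IH Hs sY allY Hf => [|v' Y'] _ Hs sY allY Hf.
  exists (fun _ => 0), (fun k => v + k%:~R * s); split.
    by move=> k; rewrite intrD mulrDl mul1r; lra.
  move=> w; rewrite inE => /eqP ->; rewrite mulr0z mul0r addr0 lexx /=; lra.
set m := f v'.
have hv' : st m <= v' < st m + s by apply: Hf; rewrite mem_head.
have vv' : v' <= v by move: allY => /= /andP[].
have allY' : all (fun w => w <= v') Y' := order_path_min ge_tr sY.
have fw_le : forall w, w \in v' :: Y' -> f w <= m.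
  move=> w wY; rewrite leNgt; apply/negP => mw.
  have wv' : w <= v'.
    move: wY; rewrite inE => /orP[/eqP -> //|wY].
    by move/allP: allY' => /(_ w wY).
  have hw := Hf w wY.
  have := @G_far R s s0 f st Hst v' w 0 hv' hw.
  rewrite mul0r addr0 => h.
  have : v' < w by apply: h; lia.
  lra.
case: (ltP v (st m + s)) => Hc.
  exists (fun r => if r == v then m else f r), st; split=> // w.
  rewrite inE; case: eqP => [->|nwv] /=.
    by move=> _; move: hv' => /andP[h1 h2]; apply/andP; split; lra.
  by move=> wY; apply: Hf.
exists (fun r => if r == v then m + 1 else f r),
  (fun k => if k <= m then st k else v + (k - (m + 1))%:~R * s); split.
  move=> k; case: (lerP k m) => h1; case: (lerP (k + 1) m) => h2.
  - exact: Hst.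
  - have ek : k = m by lia.
    by rewrite ek subrr mulr0z mul0r addr0.
  - lia.
  - have -> : k + 1 - (m + 1) = (k - (m + 1)) + 1 by lia.
    by rewrite (@intrD R (k - (m + 1)) 1) mulrDl mul1r; lra.
move=> w; rewrite inE; case: eqP => [->|nwv] /=.
  have -> : (m + 1 <= m) = false by lia.
  rewrite subrr mulr0z mul0r addr0 lexx /=; lra.
move=> wY; have -> : f w <= m by exact: fw_le.
exact: Hf.
Qed.

Definition sv (R : rcfType) : R := Num.sqrt (2^-1).

Lemma sv_gt0 (R : rcfType) : 0 < sv R.
Proof. by rewrite sqrtr_gt0 invr_gt0 ltr0n. Qed.

Lemma sv_sq (R : rcfType) : sv R * sv R = 2^-1.
Proof. by rewrite -expr2 sqr_sqrtr // invr_ge0 ler0n. Qed.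

Lemma sv_big (R : rcfType) : 2 < 3 * sv R.
Proof. have h := sv_sq R; have h0 := sv_gt0 R; nra. Qed.

Lemma sqrt_le1 (R : rcfType) (a : R) : (Num.sqrt a <= 1) = (a <= 1).
Proof. by rewrite -{1}sqrtr1 ler_sqrt // ler01. Qed.


Definition code (d : int) : 'I_5 := inord (absz (d + 2)).
Definition dec (c : 'I_5) : int := (c : nat)%:Z - 2.
Definition kcode (a b : int * int) := (code (b.1 - a.1), code (b.2 - a.2)).
Definition kadd (a : int * int) (c : 'I_5 * 'I_5) := (a.1 + dec c.1, a.2 + dec c.2).
Definition lexlt (a b : int * int) := (a.1 < b.1) || ((a.1 == b.1) && (a.2 < b.2)).
Definition P10 (c : 'I_5 * 'I_5) :=
  ((2 < c.1) || ((c.1 == 2 :> nat) && (2 < c.2)))%N &&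
  ~~ ((((c.1:nat) == 0) || ((c.1:nat) == 4)) && (((c.2:nat) == 0) || ((c.2:nat) == 4))).

Lemma code_val d : -2 <= d <= 2 -> (code d : nat) = absz (d + 2).
Proof. by move=> h; rewrite /code inordK //; lia. Qed.

Lemma decK d : -2 <= d <= 2 -> dec (code d) = d.
Proof. by move=> h; rewrite /dec code_val //; lia. Qed.

Definition o5 (k : nat) : 'I_5 := inord k.
Definition L10 : seq ('I_5 * 'I_5) := [:: (o5 2, o5 3); (o5 2, o5 4); (o5 3, o5 0); (o5 3, o5 1); (o5 3, o5 2); (o5 3, o5 3); (o5 3, o5 4); (o5 4, o5 1); (o5 4, o5 2); (o5 4, o5 3)].
Definition L9 : seq ('I_5 * 'I_5) := [:: (o5 2, o5 3); (o5 2, o5 4); (o5 3, o5 1); (o5 3, o5 2); (o5 3, o5 3); (o5 3, o5 4); (o5 4, o5 1); (o5 4, o5 2); (o5 4, o5 3)].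
Definition L8 : seq ('I_5 * 'I_5) := [:: (o5 2, o5 3); (o5 3, o5 0); (o5 3, o5 1); (o5 3, o5 2); (o5 3, o5 3); (o5 4, o5 1); (o5 4, o5 2); (o5 4, o5 3)].

Lemma inL10 (c : 'I_5 * 'I_5) : P10 c -> c \in L10.
Proof.
case: c => [a b]; rewrite /L10 !inE !xpair_eqE -!val_eqE /o5 /= !inordK //; move: a b.
by move=> [[|[|[|[|[|i]]]]] Hi] [[|[|[|[|[|j]]]]] Hj].
Qed.

Lemma inL9 (c : 'I_5 * 'I_5) : P10 c -> (c.2 : nat) != 0%N -> c \in L9.
Proof.
case: c => [a b]; rewrite /L9 !inE !xpair_eqE -!val_eqE /o5 /= !inordK //; move: a b.
by move=> [[|[|[|[|[|i]]]]] Hi] [[|[|[|[|[|j]]]]] Hj].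
Qed.

Lemma inL8 (c : 'I_5 * 'I_5) : P10 c -> (c.2 : nat) != 4%N -> c \in L8.
Proof.
case: c => [a b]; rewrite /L8 !inE !xpair_eqE -!val_eqE /o5 /= !inordK //; move: a b.
by move=> [[|[|[|[|[|i]]]]] Hi] [[|[|[|[|[|j]]]]] Hj].
Qed.

Lemma code_ok (a b : int * int) : -2 <= b.1 - a.1 <= 2 -> -2 <= b.2 - a.2 <= 2 ->
  ~~ (((b.1 - a.1 == 2) || (b.1 - a.1 == -2)) && ((b.2 - a.2 == 2) || (b.2 - a.2 == -2))) ->
  lexlt a b -> P10 (kcode a b) /\ b = kadd a (kcode a b).
Proof.
case: a b => [a1 a2] [b1 b2] /= h1 h2 h3 hl.
rewrite /P10 /kadd /kcode /= !decK // !code_val //; split; last by congr pair; lia.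
move: h3 hl; rewrite /lexlt /=; lia.
Qed.

Lemma lex_total (a b : int * int) : a != b -> ~~ lexlt a b -> lexlt b a.
Proof. case: a b => [a1 a2] [b1 b2]; rewrite /lexlt xpair_eqE /=; lia. Qed.


Section Hop.
Variable T : finType.
Variable H : {set {set T}}.

Lemma hop_mono k k' x y : (k <= k')%N -> hop_le H k x y -> hop_le H k' x y.
Proof. by move=> kk [s [h1 h2 h3]]; exists s; split => //; apply: leq_trans h1 kk. Qed.

Lemma hop_cat a b x y z : hop_le H a x y -> hop_le H b y z -> hop_le H (a + b) x z.
Proof.
move=> [s1 [h1 p1 l1]] [s2 [h2 p2 l2]]; exists (s1 ++ s2); split.
- by rewrite size_cat leq_add.
- by rewrite cat_path p1 l1 p2.
- by rewrite last_cat l1.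
Qed.

Lemma hop_step x y : x = y \/ [set x; y] \in H -> hop_le H 1 x y.
Proof.
case: (eqVneq x y) => [<- _|nxy [e|e]]; first by exists [::].
  by rewrite e eqxx in nxy.
by exists [:: y]; split => //=; rewrite andbT /adjH nxy.
Qed.

Lemma hop_rev s x : path (adjH H) x s -> hop_le H (size s) (last x s) x.
Proof.
elim: s x => [|z s IH] x /=; first by exists [::].
case/andP => hxz ps.
have := hop_cat (IH z ps) (hop_step (y:=x) _); rewrite addn1; apply.
by right; move: hxz; rewrite /adjH setUC => /andP[].
Qed.

Lemma hop_sym k x y : hop_le H k x y -> hop_le H k y x.
Proof. by move=> [s [h1 h2 <-]]; apply: hop_mono h1 _; apply: hop_rev. Qed.
End Hop.

Lemma card_bigcup_le (I : finType) (A : {set I}) (U : finType) (F : I -> {set U}) :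
  (#|\bigcup_(i in A) F i| <= \sum_(i in A) #|F i|)%N.
Proof.
elim/big_rec2: _ => [|i B n _ IH]; first by rewrite cards0.
by apply: leq_trans (leq_card_setU _ _).1 _; rewrite leq_add2l.
Qed.

Section Main.
Variables (R : rcfType) (T : finType) (p : T -> R * R).
Variables (fx fy : R -> int) (sx sy : int -> R).
Hypotheses (Hsx : forall k, sx k + sv R <= sx (k + 1)) (Hsy : forall k, sy k + sv R <= sy (k + 1)).
Hypotheses (Hfx : forall t, inS (sv R) fx sx (p t).1) (Hfy : forall t, inS (sv R) fy sy (p t).2).

Local Notation s := (sv R).

Lemma udgP x y : udg_edge p x y =
  (x != y) && (((p x).1 - (p y).1)^+2 + ((p x).2 - (p y).2)^+2 <= 1).
Proof. by rewrite /udg_edge /edist sqrt_le1. Qed.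

Lemma udg_sym x y : udg_edge p x y -> udg_edge p y x.
Proof.
rewrite !udgP eq_sym => /andP[-> h]; rewrite /=.
by rewrite -sqrrN opprB -[((p y).2 - _)^+2]sqrrN opprB.
Qed.

Lemma sq_le1 (a : R) : a ^+ 2 <= 1 -> a <= 1 /\ - a <= 1.
Proof. move=> h; have h1 := sqr_ge0 (a - 1); have h2 := sqr_ge0 (a + 1); split; nra. Qed.

Lemma udg_coord x y : udg_edge p x y ->
  [/\ x != y, (p x).1 - (p y).1 <= 1, (p y).1 - (p x).1 <= 1,
      (p x).2 - (p y).2 <= 1 & (p y).2 - (p x).2 <= 1].
Proof.
rewrite udgP => /andP[-> h].
have h1 := sqr_ge0 ((p x).1 - (p y).1); have h2 := sqr_ge0 ((p x).2 - (p y).2).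
have [a1 a2] : ((p x).1 - (p y).1) <= 1 /\ - ((p x).1 - (p y).1) <= 1 by apply: sq_le1; lra.
have [b1 b2] : ((p x).2 - (p y).2) <= 1 /\ - ((p x).2 - (p y).2) <= 1 by apply: sq_le1; lra.
by split => //; lra.
Qed.


Definition key t : int * int := (fx (p t).1, fy (p t).2).

Lemma sv_sq2 : 2 * (s * s) = 1.
Proof. by rewrite sv_sq mulfV // pnatr_eq0. Qed.

Lemma small_sq (a b : R) : a < s -> - a < s -> b < s -> - b < s -> a ^+ 2 + b ^+ 2 <= 1.
Proof.
move=> a1 a2 b1 b2; have h0 := sv_gt0 R; have hs := sv_sq2.
have : 0 < (s - a) * (s + a) by apply: mulr_gt0; lra.
have : 0 < (s - b) * (s + b) by apply: mulr_gt0; lra.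
rewrite !expr2; nra.
Qed.

Lemma same_key_udg x y : x != y -> key x = key y -> udg_edge p x y.
Proof.
move=> nxy [ex ey]; rewrite udgP nxy /=.
have [a1 a2] := G_same (Hfx x) (Hfx y) ex.
have [b1 b2] := G_same (Hfy x) (Hfy y) ey.
apply: small_sq; lra.
Qed.

Lemma coord_off (f : R -> int) (st : int -> R) (Hst : forall k, st k + s <= st (k+1)) v w :
  inS s f st v -> inS s f st w -> w - v <= 1 -> v - w <= 1 ->
  -2 <= f w - f v <= 2 /\ ((f w - f v == 2) || (f w - f v == -2) -> s * s < (w - v) * (w - v)).
Proof.
move=> hv hw d1 d2; have h0 := sv_gt0 R; have hb := sv_big R.
split.
  apply/andP; split; rewrite leNgt; apply/negP => h.
    have := @G_far R s h0 f st Hst w v 2 hw hv; move=> /(_ _) H.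
    have : w + 2 * s < v by apply: H; lia.
    lra.
  have := @G_far R s h0 f st Hst v w 2 hv hw; move=> /(_ _) H.
  have : v + 2 * s < w by apply: H; lia.
  lra.
case/orP => /eqP h.
  have := @G_far R s h0 f st Hst v w 1 hv hw; rewrite mul1r => /(_ _) H.
  have : v + s < w by apply: H; lia.
  nra.
have := @G_far R s h0 f st Hst w v 1 hw hv; rewrite mul1r => /(_ _) H.
have : w + s < v by apply: H; lia.
nra.
Qed.

Lemma udg_off x y : udg_edge p x y ->
  [/\ -2 <= (key y).1 - (key x).1 <= 2, -2 <= (key y).2 - (key x).2 <= 2 &
     ~~ ((((key y).1 - (key x).1 == 2) || ((key y).1 - (key x).1 == -2)) &&
         (((key y).2 - (key x).2 == 2) || ((key y).2 - (key x).2 == -2)))].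
Proof.
move=> e; have [nxy c1 c2 c3 c4] := udg_coord e.
have [o1 q1] := coord_off Hsx (Hfx x) (Hfx y) c2 c1.
have [o2 q2] := coord_off Hsy (Hfy x) (Hfy y) c4 c3.
split => //; apply/negP => /andP[/q1 h1 /q2 h2].
move: e; rewrite udgP => /andP[_]; have hs := sv_sq2.
rewrite -sqrrN opprB -[((p x).2 - _)^+2]sqrrN opprB !expr2; lra.
Qed.

Definition rep t := odflt t [pick u | key u == key t].

Lemma rep_key t : key (rep t) = key t.
Proof. by rewrite /rep; case: pickP => [u /eqP //|/(_ t)]; rewrite eqxx. Qed.

Lemma rep_eq t t' : key t = key t' -> rep t = rep t'.
Proof.
rewrite /rep => ->; case: pickP => [u //|/(_ t')]; by rewrite eqxx.
Qed.

Lemma rep_idem t : rep (rep t) = rep t.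
Proof. by apply: rep_eq; exact: rep_key. Qed.

Definition NR := [set t | t != rep t].
Definition Reps := ~: NR.
Definition star := [set [set t; rep t] | t in NR].
Definition W r c (ab : T * T) :=
  [&& key ab.1 == key r, key ab.2 == kadd (key r) c & udg_edge p ab.1 ab.2].
Definition Cr r := [set c | P10 c && [exists ab, W r c ab]].
Definition E r c : {set T} :=
  if [pick ab | W r c ab] is Some ab then [set ab.1; ab.2] else set0.
Definition X r := [set E r c | c in Cr r].
Definition cross := \bigcup_(r in Reps) X r.
Definition Hg := star :|: cross.

Lemma Hg_span : spanning_subgraph_udg p Hg.
Proof.
move=> e; rewrite inE => /orP[/imsetP[t tNR ->]|/bigcupP[r _ /imsetP[c cC ->]]].
  exists t, (rep t); split => //; apply: same_key_udg; last by rewrite rep_key.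
  by move: tNR; rewrite inE.
move: cC; rewrite inE => /andP[_ /existsP[ab0 w0]].
rewrite /E; case: pickP => [ab /and3P[_ _ u]|/(_ ab0)]; last by rewrite w0.
by exists ab.1, ab.2.
Qed.

Lemma step_rep t : hop_le Hg 1 t (rep t).
Proof.
apply: hop_step; case: (eqVneq t (rep t)) => [<-|ne]; [by left|right].
by rewrite inE; apply/orP; left; apply/imsetP; exists t; rewrite ?inE.
Qed.

Lemma hop_same x y : key x = key y -> hop_le Hg 2 x y.
Proof.
move=> e; have h := hop_sym (step_rep y); rewrite -(rep_eq e) in h.
exact: hop_cat (step_rep x) h.
Qed.

Lemma hop_lex x y : udg_edge p x y -> lexlt (key x) (key y) -> hop_le Hg 5 x y.
Proof.
move=> u l; have [o1 o2 o3] := udg_off u.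
have [P k] := code_ok o1 o2 o3 l.
set c := kcode (key x) (key y) in P k.
set r := rep x.
have rR : r \in Reps by rewrite !inE negbK /r rep_idem.
have W0 : W r c (x, y) by rewrite /W /= /r rep_key eqxx -k eqxx u.
have cC : c \in Cr r by rewrite inE P /=; apply/existsP; exists (x, y).
have EH : E r c \in Hg.
  by rewrite inE; apply/orP; right; apply/bigcupP; exists r => //; apply/imsetP; exists c.
move: EH; rewrite /E; case: pickP => [[a b] /= /and3P[/eqP ka /eqP kb uab] EH|/(_ (x, y))];
  last by rewrite W0.
rewrite /r rep_key in ka; rewrite /r rep_key -k in kb.
have ra : rep a = r by apply: rep_eq.
have rb : rep b = rep y by apply: rep_eq.
have s1 := step_rep x.
have s2 := hop_sym (step_rep a); rewrite ra in s2.
have s3 : hop_le Hg 1 a b by apply: hop_step; right.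
have s4 := step_rep b; rewrite rb in s4.
have s5 := hop_sym (step_rep y).
exact: (hop_cat (hop_cat (hop_cat (hop_cat s1 s2) s3) s4) s5).
Qed.

Lemma Hg_hop x y : udg_edge p x y -> hop_le Hg 5 x y.
Proof.
move=> u; case: (eqVneq (key x) (key y)) => [e|ne].
  exact: hop_mono (hop_same e).
case: (boolP (lexlt (key x) (key y))) => l; first exact: hop_lex.
apply: hop_sym; apply: hop_lex; [exact: udg_sym | exact: lex_total].
Qed.

Lemma X_le10 r : (#|X r| <= 10)%N.
Proof.
apply: leq_trans (leq_imset_card _ _) _.
apply: leq_trans (card_size L10).
apply: subset_leq_card; apply/subsetP => c; rewrite inE => /andP[h _].
exact: inL10.
Qed.

Definition MR := rep @: NR.
Definition SR := Reps :\: MR.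

Lemma SR_single r a : r \in SR -> key a = key r -> a = r.
Proof.
move=> /setDP[rR rM] ka.
have rr : rep r = r by move: rR; rewrite !inE negbK => /eqP <-.
have ra : rep a = r by rewrite (rep_eq ka) rr.
case: (eqVneq a (rep a)) => [e|ne]; first by rewrite e ra.
exfalso; apply: (negP rM); apply/imsetP; exists a; last by rewrite ra.
by rewrite inE ne.
Qed.

Lemma no_both r c1 c2 : r \in SR -> c1 \in Cr r -> c2 \in Cr r ->
  (c1.2 : nat) = 0%N -> (c2.2 : nat) = 4%N -> False.
Proof.
move=> rS; rewrite !inE => /andP[_ /existsP[[a1 b1] /and3P[/eqP k1 /eqP l1 u1]]]
  /andP[_ /existsP[[a2 b2] /and3P[/eqP k2 /eqP l2 u2]]] z1 z2 /=.
move: k1 k2 l1 l2 u1 u2 => /= k1 k2 l1 l2 u1 u2.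
have e1 := SR_single rS k1; have e2 := SR_single rS k2; subst a1 a2.
have [_ _ _ _ d1] := udg_coord (udg_sym u1).
have [_ _ _ d2 _] := udg_coord (udg_sym u2).
have hy1 : fy (p b1).2 = fy (p r).2 - 2.
  by move: l1; rewrite /key /kadd /dec z1 => -[_ ->]; lia.
have hy2 : fy (p b2).2 = fy (p r).2 + 2.
  by move: l2; rewrite /key /kadd /dec z2 => -[_ ->]; lia.
have := @G_far R s (sv_gt0 R) fy sy Hsy (p b1).2 (p b2).2 3 (Hfy b1) (Hfy b2).
move=> /(_ _) h; have : (p b1).2 + 3%:R * s < (p b2).2 by apply: h; lia.
have := sv_big R; lra.
Qed.

Lemma X_le9 r : r \in SR -> (#|X r| <= 9)%N.
Proof.
move=> rS; apply: leq_trans (leq_imset_card _ _) _.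
case: (boolP [exists c in Cr r, (c.2 : nat) == 0%N]) => [/existsP[c1 /andP[c1C /eqP c1z]]|hno].
  apply: (@leq_trans #|L8|); last by apply: leq_trans (card_size L8) _.
  apply: subset_leq_card; apply/subsetP => c cC.
  have := cC; rewrite inE => /andP[h _]; apply: inL8 => //.
  by apply/eqP => c4; apply: (no_both rS c1C cC).
apply: (@leq_trans #|L9|); last by apply: leq_trans (card_size L9) _.
apply: subset_leq_card; apply/subsetP => c cC.
have := cC; rewrite inE => /andP[h _]; apply: inL9 => //.
by apply/eqP => c0; apply: (negP hno); apply/existsP; exists c; rewrite cC c0.
Qed.

Lemma Hg_card : (#|Hg| <= 9 * #|T|)%N.
Proof.
have h1 : (#|Hg| <= #|star| + #|cross|)%N := (leq_card_setU _ _).1.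
have h2 : (#|star| <= #|NR|)%N := leq_imset_card _ _.
have sub : cross \subset (\bigcup_(r in SR) X r) :|: (\bigcup_(r in MR) X r).
  apply/subsetP => e /bigcupP[r rR eX]; rewrite inE; apply/orP.
  case: (boolP (r \in MR)) => rM; [right|left]; apply/bigcupP; exists r => //.
  by rewrite inE rM rR.
have h3 : (#|cross| <= 9 * #|SR| + 10 * #|MR|)%N.
  apply: leq_trans (subset_leq_card sub) _.
  apply: leq_trans (leq_card_setU _ _).1 _.
  apply: leq_add.
    apply: leq_trans (card_bigcup_le SR X) _.
    apply: (@leq_trans (\sum_(r in SR) 9%N)).
      by apply: leq_sum => i; exact: X_le9.
    by rewrite sum_nat_const mulnC.
  apply: leq_trans (card_bigcup_le MR X) _.
  apply: (@leq_trans (\sum_(r in MR) 10%N)).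
    by apply: leq_sum => i _; exact: X_le10.
  by rewrite sum_nat_const mulnC.
have h4 : (#|MR| <= #|NR|)%N := leq_imset_card _ _.
have MRsub : MR \subset Reps.
  by apply/subsetP => _ /imsetP[t _ ->]; rewrite !inE negbK rep_idem.
have h5 : (#|SR| + #|MR| = #|Reps|)%N.
  by rewrite -(cardsID MR Reps) (setIidPr MRsub) addnC.
have h6 : (#|NR| + #|Reps| = #|T|)%N := cardsC NR.
lia.
Qed.

Lemma main_exists : exists H : {set {set T}},
  [/\ spanning_subgraph_udg p H, (#|H| <= 9 * #|T|)%N &
      forall x y : T, udg_edge p x y -> hop_le H 5 x y].
Proof. exists Hg; split; [exact: Hg_span | exact: Hg_card | exact: Hg_hop]. Qed.

End Main.

Theorem theorem3 (R : rcfType) (T : finType) (p : T -> R * R) (n : nat) :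
  injective p -> #|T| = n ->
  exists H : {set {set T}},
    [/\ spanning_subgraph_udg p H,
        (#|H| <= 9 * n)%N &
        forall x y : T, udg_edge p x y -> hop_le H 5 x y].
Proof.
move=> _ <-.
have [fx [sx [Hsx Hfx]]] := strips_exist [seq (p t).1 | t <- enum T] (sv_gt0 R).
have [fy [sy [Hsy Hfy]]] := strips_exist [seq (p t).2 | t <- enum T] (sv_gt0 R).
have Hfx' : forall t, inS (sv R) fx sx (p t).1.
  by move=> t; apply: Hfx; apply: map_f; rewrite mem_enum.
have Hfy' : forall t, inS (sv R) fy sy (p t).2.
  by move=> t; apply: Hfy; apply: map_f; rewrite mem_enum.
exact: (main_exists Hsx Hsy Hfx' Hfy').
Qed.
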